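(* Let $L$ be a factorial $W^*$-lattice of type $I_n$. Then (a) for every $l\in L$, $\bigvee_{m\in Min(l)}m=l$; (b) for all $l,l'\in L$, $l\le l'$ if and only if $Min(l)\subseteq Min(l')$.
   Context: Orthocomplemented lattice (paper's convention): a set $L$ with a partial order $\le$ in which every subset has a supremum and an infimum ($l\vee l'$, $l\wedge l'$ denote binary sup/inf, $0=\inf L$, $1=\sup L$), such that: (continuity) for every increasing net $(l_i)$ and every $l$, $\bigvee_i(l\wedge l_i)=l\wedge\bigvee_i l_i$, and for every decreasing net $(l_i)$ and every $l$, $\bigwedge_i(l\vee l_i)=l\vee\bigwedge_i l_i$; (modularity) $l\le l''$ implies $(l\vee l')\wedge l''=l\vee(l'\wedge l'')$ for all $l'$; together with a map $l\mapsto l^\perp$, also written $1-l$, satisfying $l^{\perp\perp}=l$, $l\vee l^\perp=1$, $l\wedge l^\perp=0$, and $l\le l'\Rightarrow l'^\perp\le l^\perp$. For $l'\le l$ put $l-l'=(1-l')\wedge l$. Write $\perp(l)=\{l'\in L: l'\le 1-l\}$; elements of $\perp(l)$ are orthogonal to $l$; a family is mutually orthogonal if any two distinct members are orthogonal. $l$ commutes with $l'$ if $l=(l\wedge l')\vee(l\wedge l'^\perp)$; $c(l)$ is the set of elements commuting with $l$; $C(L)=\bigcap_{l\in L}c(l)$. $L$ is factorial if $C(L)=\{0,1\}$ and abelian if $C(L)=L$. For $l\in L$, $L\wedge l=\{l'\in L:l'\le l\}$ is an orthocomplemented lattice with complement $l'\mapsto l-l'$; $l$ is an abelian element if $L\wedge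 l$ is abelian. $L$ is an R-lattice if $C(L\wedge l)=\{c\wedge l: c\in C(L)\}$ for every $l\in L$. An element $l\ne 0$ is minimal if for every $l'\in L$ either $l\wedge l'=0$ or $l\wedge l'=l$; $Min(L)$ is the set of minimal elements and $Min(l)=\{m\in Min(L): m\le l\}$. Regular equivalence relation: for an equivalence relation $\sim$ on $L$ write $l\le_\sim l'$ if there is $l''\le l'$ with $l\sim l''$. $\sim$ is regular if: (1) $l\sim 0\iff l=0$; (2) $l\ge l'$ and $l\le_\sim l'$ imply $l\sim l'$; (3) for all $l,l'$, $l\le_\sim l'$ or $l'\le_\sim l$; (4) if $(l_i)$, $(l_i')$ are families of mutually orthogonal elements with $l_i\sim l_i'$ for all $i$, then $\bigvee_i l_i\sim\bigvee_i l_i'$; (5) $l'\le l$ and $l'\sim l$ imply $l'=l$. A family $(l_i)_{i\in I}$ is independent if for every partition $\{J,K\}$ of $I$, $\bigvee_{i\in J}l_i\wedge\bigvee_{i\in K}l_i=0$. A $\sim$-compatible dimension function is a map $D:L\to[0,1]$ with $D(0)=0$, $D(1)=1$, $D(l\vee l')+D(l\wedge l')=D(l)+D(l')$, $D(l)=D(l')\iff l\sim l'$, $D(l)\le D(l')\iff l\le_\sim l'$, and $D(\bigvee_i l_i)=\sum_i D(l_i)$ for every finite or countable independent family. A factorial R-lattice $L$ is of type $I_n$ if it carries a regular equivalence relation $\sim$ and a $\sim$-compatible dimension function $D$ with $D(L)=\{0,\frac1n,\dots,\frac{n-1}{n},1\}$. A factorial $W^*$-lattice of type $I_n$ is a factorial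 R-lattice of type $I_n$ whose cardinality equals that of $\mathbb R$. *)

(* Defs.v *)
From Stdlib Require Import Reals List.
Open Scope R_scope.

(* Raw data of a (complete) orthocomplemented lattice: carrier, order,
   arbitrary suprema/infima of subsets, and the orthocomplement l |-> l^perp (= 1 - l). *)
Record OLat := {
  car  :> Type;
  le   : car -> car -> Prop;
  sup  : (car -> Prop) -> car;
  inf  : (car -> Prop) -> car;
  perp : car -> car
}.

Section Defs.
Variable L : OLat.

Definition join (a b : L) : L := sup L (fun x => x = a \/ x = b).
Definition meet (a b : L) : L := inf L (fun x => x = a \/ x = b).
Definition bot : L := inf L (fun _ => True).
Definition top : L := sup L (fun _ => True).
Definition bigsup {I : Type} (f : I -> L) : L := sup L (fun x => exists i, f i = x).
Definition biginf {I : Type} (f : I -> L) : L := inf L (fun x => exists i, f i = x).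
(* l - l' := (1 - l') /\ l  (used for l' <= l) *)
Definition lminus (l l' : L) : L := meet (perp L l') l.

Definition directed {I : Type} (r : I -> I -> Prop) : Prop :=
  inhabited I /\ (forall i, r i i) /\ (forall i j k, r i j -> r j k -> r i k) /\
  (forall i j, exists k, r i k /\ r j k).

Definition is_ocl : Prop :=
  (forall a, le L a a) /\
  (forall a b, le L a b -> le L b a -> a = b) /\
  (forall a b c, le L a b -> le L b c -> le L a c) /\
  (forall (S : L -> Prop), (forall x, S x -> le L x (sup L S)) /\
       (forall u, (forall x, S x -> le L x u) -> le L (sup L S) u)) /\
  (forall (S : L -> Prop), (forall x, S x -> le L (inf L S) x) /\
       (forall u, (forall x, S x -> le L u x) -> le L u (inf L S))) /\
  (forall (I : Type) (r : I -> I -> Prop) (f : I -> L), directed r ->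
      (forall i j, r i j -> le L (f i) (f j)) ->
      forall l, bigsup (fun i => meet l (f i)) = meet l (bigsup f)) /\
  (forall (I : Type) (r : I -> I -> Prop) (f : I -> L), directed r ->
      (forall i j, r i j -> le L (f j) (f i)) ->
      forall l, biginf (fun i => join l (f i)) = join l (biginf f)) /\
  (forall l l' l'', le L l l'' -> meet (join l l') l'' = join l (meet l' l'')) /\
  (forall l, perp L (perp L l) = l) /\
  (forall l, join l (perp L l) = top) /\
  (forall l, meet l (perp L l) = bot) /\
  (forall l l', le L l l' -> le L (perp L l') (perp L l)).

Definition orthogonal (l' l : L) : Prop := le L l' (perp L l).
Definition mutually_orthogonal {I : Type} (f : I -> L) : Prop :=
  forall i j, i <> j -> orthogonal (f i) (f j).

Definition commutes (l l' : L) : Prop := l = join (meet l l') (meet l (perp L l')).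
Definition center (c : L) : Prop := forall l, commutes c l.
Definition factorial : Prop := forall c, center c <-> (c = bot \/ c = top).

(* centre of the orthocomplemented lattice L /\ l (complement l' |-> l - l') *)
Definition center_below (l c : L) : Prop :=
  le L c l /\
  forall l', le L l' l -> c = join (meet c l') (meet c (lminus l l')).
Definition R_lattice : Prop :=
  forall l c, center_below l c <-> exists c0, center c0 /\ c = meet c0 l.

Definition minimal (m : L) : Prop :=
  m <> bot /\ forall l', meet m l' = bot \/ meet m l' = m.
Definition Min (l : L) (m : L) : Prop := minimal m /\ le L m l.

Definition le_sim (sim : L -> L -> Prop) (l l' : L) : Prop :=
  exists l'', le L l'' l' /\ sim l l''.
Definition regular (sim : L -> L -> Prop) : Prop :=
  (forall a, sim a a) /\ (forall a b, sim a b -> sim b a) /\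
  (forall a b c, sim a b -> sim b c -> sim a c) /\
  (forall l, sim l bot <-> l = bot) /\
  (forall l l', le L l' l -> le_sim sim l l' -> sim l l') /\
  (forall l l', le_sim sim l l' \/ le_sim sim l' l) /\
  (forall (I : Type) (f g : I -> L), mutually_orthogonal f -> mutually_orthogonal g ->
      (forall i, sim (f i) (g i)) -> sim (bigsup f) (bigsup g)) /\
  (forall l l', le L l' l -> sim l' l -> l' = l).

Definition independent {I : Type} (f : I -> L) : Prop :=
  forall J : I -> Prop,
    meet (sup L (fun x => exists i, J i /\ f i = x))
         (sup L (fun x => exists i, ~ J i /\ f i = x)) = bot.

End Defs.

(* sum of a family of nonnegative reals over an arbitrary index type:
   the least upper bound of the sums over finite subfamilies *)
Fixpoint sum_list {I : Type} (f : I -> R) (s : list I) : R :=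
  match s with nil => 0 | cons i s' => f i + sum_list f s' end.
Definition has_sum {I : Type} (f : I -> R) (s : R) : Prop :=
  is_lub (fun r => exists F : list I, NoDup F /\ r = sum_list f F) s.

Definition countable (I : Type) : Prop := exists g : I -> nat, forall i j, g i = g j -> i = j.

Definition dimension_function (L : OLat) (sim : L -> L -> Prop) (D : L -> R) : Prop :=
  (forall l, 0 <= D l <= 1) /\
  D (bot L) = 0 /\ D (top L) = 1 /\
  (forall l l', D (join L l l') + D (meet L l l') = D l + D l') /\
  (forall l l', D l = D l' <-> sim l l') /\
  (forall l l', D l <= D l' <-> le_sim L sim l l') /\
  (forall (I : Type) (f : I -> L), countable I -> independent L f ->
      has_sum (fun i => D (f i)) (D (bigsup L f))).

Definition type_In (L : OLat) (n : nat) : Prop :=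
  is_ocl L /\ factorial L /\ R_lattice L /\
  exists (sim : L -> L -> Prop) (D : L -> R),
    regular L sim /\ dimension_function L sim D /\
    (forall x, (exists l, D l = x) <-> exists k : nat, (k <= n)%nat /\ x = INR k / INR n).

Definition card_R (L : OLat) : Prop :=
  exists f : L -> R, (forall a b, f a = f b -> a = b) /\ (forall y, exists a, f a = y).

Definition W_lattice_type_In (L : OLat) (n : nat) : Prop := type_In L n /\ card_R L.

(* Main.v *)
Require Import Defs.
From Stdlib Require Import Reals List.
From Stdlib Require Import Lra Lia Psatz Classical Wf_nat.
Open Scope R_scope.

Theorem mainTheorem16 (L : OLat) (n : nat) (hn : (1 <= n)%nat)
  (HL : W_lattice_type_In L n) :
  (forall l : L, sup L (Min L l) = l) /\
  (forall l l' : L, le L l l' <-> (forall m, Min L l m -> Min L l' m)).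
Proof.
  destruct HL as [[Hocl [_ [_ [sim [D [Hreg [Hdim Hrange]]]]]]] _].
  destruct Hocl as [Hrefl [Hanti [Htrans [Hsup [Hinf [_ [_ [Hmod [_ [Hjp [Hmp _]]]]]]]]]]].
  destruct Hreg as [Hsrefl [_ [_ [_ [_ [_ [_ Hreg5]]]]]]].
  destruct Hdim as [_ [_ [_ [_ [HDeq [HDle _]]]]]].
  assert (meet_l : forall a b, le L (meet L a b) a).
  { intros a b; apply (proj1 (Hinf _)); auto. }
  assert (meet_r : forall a b, le L (meet L a b) b).
  { intros a b; apply (proj1 (Hinf _)); auto. }
  assert (meet_glb : forall a b u, le L u a -> le L u b -> le L u (meet L a b)).
  { intros a b u H1 H2; apply (proj2 (Hinf _)); intros x [->| ->]; auto. }
  assert (bot_le : forall x, le L (bot L) x).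
  { intro x; apply (proj1 (Hinf _)); auto. }
  assert (le_top : forall x, le L x (top L)).
  { intro x; apply (proj1 (Hsup _)); auto. }
  assert (meet_top : forall l, meet L (top L) l = l).
  { intro l; apply Hanti; auto. }
  assert (join_bot : forall s, join L s (bot L) = s).
  { intro s; apply Hanti.
    - apply (proj2 (Hsup _)); intros x [->| ->]; auto.
    - apply (proj1 (Hsup _)); auto. }
  assert (Hn0 : 0 < INR n) by (apply lt_0_INR; lia).
  assert (Hex : forall k y, D y = INR k / INR n -> y <> bot L ->
             exists x, minimal L x /\ le L x y).
  { intro k; induction k as [k IH] using (well_founded_induction lt_wf).
    intros y Hy Hyb.
    destruct (classic (minimal L y)) as [Hm|Hm].
    { exists y; auto. }
    assert (Hl : exists l', meet L y l' <> bot L /\ meet L y l' <> y).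
    { apply NNPP; intro Hn; apply Hm; split; auto; intro l'.
      destruct (classic (meet L y l' = bot L)); auto; right.
      apply NNPP; intro; apply Hn; eauto. }
    destruct Hl as [l' [Hz1 Hz2]].
    set (z := meet L y l') in *.
    assert (Hzy : le L z y) by apply meet_l.
    assert (HDzy : D z <= D y).
    { apply HDle. exists z; split; auto. }
    assert (HDne : D z <> D y).
    { intro E; apply HDeq in E; apply Hz2; apply Hreg5; auto. }
    destruct (proj1 (Hrange (D z)) (ex_intro _ z eq_refl)) as [j [_ Hj]].
    assert (Hjk : (j < k)%nat).
    { destruct (Nat.lt_ge_cases j k); auto.
      assert (Hkj : (k <= j)%nat) by lia. apply le_INR in Hkj.
      assert (0 < / INR n) by (apply Rinv_0_lt_compat; lra).
      unfold Rdiv in *. exfalso. nra. }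
    destruct (IH j Hjk z Hj Hz1) as [x [Hx1 Hx2]].
    exists x; split; auto. eapply Htrans; eauto. }
  assert (Hex' : forall y, y <> bot L -> exists x, minimal L x /\ le L x y).
  { intros y Hy.
    destruct (proj1 (Hrange (D y)) (ex_intro _ y eq_refl)) as [k [_ Hk]].
    eauto. }
  assert (Ha : forall l : L, sup L (Min L l) = l).
  { intro l. set (s := sup L (Min L l)).
    assert (Hsl : le L s l).
    { apply (proj2 (Hsup _)); intros x [_ Hx]; auto. }
    destruct (classic (meet L (perp L s) l = bot L)) as [E|E].
    - pose proof (Hmod s (perp L s) l Hsl) as M.
      rewrite Hjp, meet_top, E, join_bot in M. symmetry; exact M.
    - destruct (Hex' _ E) as [x [Hx1 Hx2]].
      assert (Hxl : le L x l) by (eapply Htrans; [exact Hx2| apply meet_r]).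
      assert (Hxs : le L x s) by (apply (proj1 (Hsup _)); split; auto).
      assert (Hxp : le L x (perp L s)) by (eapply Htrans; [exact Hx2| apply meet_l]).
      assert (le L x (meet L s (perp L s))) by auto.
      rewrite Hmp in H.
      exfalso. apply (proj1 Hx1). apply Hanti; auto. }
  split; auto.
  intros l l'; split.
  - intros H m [Hm1 Hm2]; split; auto; eapply Htrans; eauto.
  - intro H. rewrite <- (Ha l).
    apply (proj2 (Hsup _)). intros x Hx. apply (H x Hx).
Qed.
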